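(* Let $k,l\ge1$ with $k\ne l$, and let $r$ be an odd integer with $1\le r\le 4kl$. Then the set $\overline{\mathcal{B}}(2k,2l;r)$ contains exactly one board from each equivalence class of $\mathcal{B}(2k,2l;r)$ under $\langle H,V\rangle$.
   Context: A $2k\times 2l$ grid ($2k$ rows top to bottom, $2l$ columns left to right); $\mathcal{B}(2k,2l;r)$ is the set of boards, i.e. subsets of exactly $r$ blocked cells. $\langle H,V\rangle=\{R_0,H,V,R_{180}\}$ ($H$, $V$ reflections across the horizontal and vertical midlines, $R_{180}$ the 180-degree rotation) acts on boards; two boards are equivalent if one is mapped to the other. Quadrants: $Q_1$ = rows $1..k$, cols $1..l$; $Q_2$ = rows $1..k$, cols $l+1..2l$; $Q_3$ = rows $k+1..2k$, cols $l+1..2l$; $Q_4$ = rows $k+1..2k$, cols $1..l$; the board partition is $(\lambda_1,\lambda_2,\lambda_3,\lambda_4)$ with $\lambda_i$ the number of blocked cells in $Q_i$. $\overline{\mathcal{B}}(2k,2l;r)$ is the set of boards in $\mathcal{B}(2k,2l;r)$ whose board partition satisfies: $\lambda_1\ge\lambda_i$ for all $i>1$; if $\lambda_1=\lambda_2$ then $\lambda_3\ge\lambda_4$; if $\lambda_1=\lambda_3$ then $\lambda_2\ge\lambda_4$; if $\lambda_1=\lambda_4$ then $\lambda_2\ge\lambda_3$. *)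

(* Defs.v *)
From mathcomp Require Import all_boot.
Set Implicit Arguments. Unset Strict Implicit. Unset Printing Implicit Defensive.

(* A cell of the 2k x 2l grid: (row, column), 0-indexed;
   row 0 is the top row, column 0 the leftmost column. *)
Definition cell (k l : nat) := ('I_(2 * k) * 'I_(2 * l))%type.

(* A board: the set of blocked cells. *)
Definition board (k l : nat) := {set cell k l}.

Definition in_B (k l r : nat) (b : board k l) : bool := #|b| == r.

Definition Hmap (k l : nat) (c : cell k l) : cell k l := (rev_ord c.1, c.2).
Definition Vmap (k l : nat) (c : cell k l) : cell k l := (c.1, rev_ord c.2).
Definition R180map (k l : nat) (c : cell k l) : cell k l :=
  (rev_ord c.1, rev_ord c.2).

Definition equiv_HV (k l : nat) (b b' : board k l) : Prop :=
  [\/ b' = b, b' = [set Hmap c | c in b], b' = [set Vmap c | c in b]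
    | b' = [set R180map c | c in b]].

(* Quadrants (0-indexed: rows < k are rows 1..k, cols < l are cols 1..l). *)
Definition inQ1 (k l : nat) (c : cell k l) : bool := (c.1 < k) && (c.2 < l).
Definition inQ2 (k l : nat) (c : cell k l) : bool := (c.1 < k) && (l <= c.2).
Definition inQ3 (k l : nat) (c : cell k l) : bool := (k <= c.1) && (l <= c.2).
Definition inQ4 (k l : nat) (c : cell k l) : bool := (k <= c.1) && (c.2 < l).

Definition lam1 (k l : nat) (b : board k l) := #|[set c in b | inQ1 c]|.
Definition lam2 (k l : nat) (b : board k l) := #|[set c in b | inQ2 c]|.
Definition lam3 (k l : nat) (b : board k l) := #|[set c in b | inQ3 c]|.
Definition lam4 (k l : nat) (b : board k l) := #|[set c in b | inQ4 c]|.

Definition in_Bbar (k l r : nat) (b : board k l) : bool :=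
  [&& in_B r b,
      lam2 b <= lam1 b, lam3 b <= lam1 b, lam4 b <= lam1 b,
      (lam1 b == lam2 b) ==> (lam4 b <= lam3 b),
      (lam1 b == lam3 b) ==> (lam4 b <= lam2 b) &
      (lam1 b == lam4 b) ==> (lam3 b <= lam2 b)].

(* Main.v *)
Require Import Defs.
From mathcomp Require Import all_boot.
From mathcomp Require Import zify.

Definition Pp (x1 x2 x3 x4 : nat) : Prop := x2<=x1 /\ x3<=x1 /\ x4<=x1 /\
  (x1=x2 -> x4<=x3) /\ (x1=x3 -> x4<=x2) /\ (x1=x4 -> x3<=x2).

Lemma Pb (x1 x2 x3 x4 : nat) : [&& x2<=x1, x3<=x1, x4<=x1, (x1==x2)==>(x4<=x3),
  (x1==x3)==>(x4<=x2) & (x1==x4)==>(x3<=x2)] <-> Pp x1 x2 x3 x4.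
Proof. rewrite /Pp. split; lia. Qed.

Lemma ex4 x1 x2 x3 x4 : odd (x1+x2+x3+x4) ->
  Pp x1 x2 x3 x4 \/ Pp x4 x3 x2 x1 \/ Pp x2 x1 x4 x3 \/ Pp x3 x4 x1 x2.
Proof. rewrite /Pp. move=> h. lia. Qed.

Lemma Bbar_iff k l r (b : board k l) :
  in_Bbar r b <-> #|b| = r /\ Pp (lam1 b) (lam2 b) (lam3 b) (lam4 b).
Proof.
rewrite /in_Bbar /in_B -Pb; split.
  by case/andP => /eqP -> ->.
by case=> -> ->; rewrite eqxx.
Qed.

Lemma card_img_filter (T : finType) (f : T -> T) (finv : involutive f)
  (b : {set T}) (p q : pred T) (hpq : forall c, p (f c) = q c) :
  #|[set c in f @: b | p c]| = #|[set c in b | q c]|.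
Proof.
transitivity #|f @: [set c in b | q c]|; last exact: (card_imset _ (inv_inj finv)).
apply: eq_card => x; rewrite !inE.
apply/andP/imsetP.
  case=> /imsetP [y yb ->] py; exists y => //.
  by rewrite inE yb -hpq.
case=> y; rewrite inE => /andP [yb qy] ->; split.
  exact: imset_f.
by rewrite hpq.
Qed.

Lemma card_img (T : finType) (f : T -> T) (finv : involutive f) (b : {set T}) :
  #|f @: b| = #|b|.
Proof. exact: (card_imset _ (inv_inj finv)). Qed.

Section Maps.
Variables k l : nat.

Lemma Hinv : involutive (@Hmap k l).
Proof. by case=> i j; rewrite /Hmap /= rev_ordK. Qed.
Lemma Vinv : involutive (@Vmap k l).
Proof. by case=> i j; rewrite /Vmap /= rev_ordK. Qed.
Lemma Rinv : involutive (@R180map k l).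
Proof. by case=> i j; rewrite /R180map /= !rev_ordK. Qed.

Ltac qt := let i := fresh "i" in let j := fresh "j" in
  case=> i j; rewrite /inQ1 /inQ2 /inQ3 /inQ4 /Hmap /Vmap /R180map /=;
  have := ltn_ord i; have := ltn_ord j; move=> ? ?; apply/idP/idP; lia.

Lemma qH1 (c : cell k l) : inQ1 (Hmap c) = inQ4 c. Proof. move: c; qt. Qed.
Lemma qH2 (c : cell k l) : inQ2 (Hmap c) = inQ3 c. Proof. move: c; qt. Qed.
Lemma qH3 (c : cell k l) : inQ3 (Hmap c) = inQ2 c. Proof. move: c; qt. Qed.
Lemma qH4 (c : cell k l) : inQ4 (Hmap c) = inQ1 c. Proof. move: c; qt. Qed.
Lemma qV1 (c : cell k l) : inQ1 (Vmap c) = inQ2 c. Proof. move: c; qt. Qed.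
Lemma qV2 (c : cell k l) : inQ2 (Vmap c) = inQ1 c. Proof. move: c; qt. Qed.
Lemma qV3 (c : cell k l) : inQ3 (Vmap c) = inQ4 c. Proof. move: c; qt. Qed.
Lemma qV4 (c : cell k l) : inQ4 (Vmap c) = inQ3 c. Proof. move: c; qt. Qed.
Lemma qR1 (c : cell k l) : inQ1 (R180map c) = inQ3 c. Proof. move: c; qt. Qed.
Lemma qR2 (c : cell k l) : inQ2 (R180map c) = inQ4 c. Proof. move: c; qt. Qed.
Lemma qR3 (c : cell k l) : inQ3 (R180map c) = inQ1 c. Proof. move: c; qt. Qed.
Lemma qR4 (c : cell k l) : inQ4 (R180map c) = inQ2 c. Proof. move: c; qt. Qed.

Lemma card_filter (b : board k l) (p : pred (cell k l)) :
  #|[set c in b | p c]| = \sum_(c in b) (p c : nat).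
Proof.
rewrite -sum1_card (eq_bigl (fun c => (c \in b) && p c)); last by move=> c; rewrite inE.
by rewrite big_mkcondr; apply: eq_bigr => c _; case: (p c).
Qed.

Lemma lam_sum (b : board k l) : #|b| = lam1 b + lam2 b + lam3 b + lam4 b.
Proof.
rewrite /lam1 /lam2 /lam3 /lam4 !card_filter -!big_split /= -sum1_card.
apply: eq_bigr => -[i j] _; rewrite /inQ1 /inQ2 /inQ3 /inQ4 /=.
by case: (ltnP i k); case: (ltnP j l).
Qed.

End Maps.

Theorem proposition7p2 (k l r : nat) :
  1 <= k -> 1 <= l -> k != l -> odd r -> 1 <= r <= 4 * k * l ->
  forall b : board k l, in_B r b ->
    exists! b' : board k l, equiv_HV b b' /\ in_Bbar r b'.
Proof.
move=> _ _ _ hr _ b /eqP hb.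
have hodd : odd (lam1 b + lam2 b + lam3 b + lam4 b) by rewrite -lam_sum hb.
have cH : #|[set Hmap c | c in b]| = r by rewrite card_img //; exact: Hinv.
have cV : #|[set Vmap c | c in b]| = r by rewrite card_img //; exact: Vinv.
have cR : #|[set R180map c | c in b]| = r by rewrite card_img //; exact: Rinv.
have lH1 : lam1 [set Hmap c | c in b] = lam4 b by apply: card_img_filter; [exact: Hinv| exact: qH1].
have lH2 : lam2 [set Hmap c | c in b] = lam3 b by apply: card_img_filter; [exact: Hinv| exact: qH2].
have lH3 : lam3 [set Hmap c | c in b] = lam2 b by apply: card_img_filter; [exact: Hinv| exact: qH3].
have lH4 : lam4 [set Hmap c | c in b] = lam1 b by apply: card_img_filter; [exact: Hinv| exact: qH4].
have lV1 : lam1 [set Vmap c | c in b] = lam2 b by apply: card_img_filter; [exact: Vinv| exact: qV1].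
have lV2 : lam2 [set Vmap c | c in b] = lam1 b by apply: card_img_filter; [exact: Vinv| exact: qV2].
have lV3 : lam3 [set Vmap c | c in b] = lam4 b by apply: card_img_filter; [exact: Vinv| exact: qV3].
have lV4 : lam4 [set Vmap c | c in b] = lam3 b by apply: card_img_filter; [exact: Vinv| exact: qV4].
have lR1 : lam1 [set R180map c | c in b] = lam3 b by apply: card_img_filter; [exact: Rinv| exact: qR1].
have lR2 : lam2 [set R180map c | c in b] = lam4 b by apply: card_img_filter; [exact: Rinv| exact: qR2].
have lR3 : lam3 [set R180map c | c in b] = lam1 b by apply: card_img_filter; [exact: Rinv| exact: qR3].
have lR4 : lam4 [set R180map c | c in b] = lam2 b by apply: card_img_filter; [exact: Rinv| exact: qR4].
have uniq : forall x y, equiv_HV b x -> equiv_HV b y -> in_Bbar r x -> in_Bbar r y -> x = y.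
  move=> x y ex ey /Bbar_iff [_ px] /Bbar_iff [_ py].
  move: px py; case: ex => ->; case: ey => -> //;
    rewrite ?lH1 ?lH2 ?lH3 ?lH4 ?lV1 ?lV2 ?lV3 ?lV4 ?lR1 ?lR2 ?lR3 ?lR4 /Pp => px py;
    exfalso; lia.
have Bb : forall x : board k l, in_Bbar r x <-> #|x| = r /\ Pp (lam1 x) (lam2 x) (lam3 x) (lam4 x).
  by move=> x; exact: (@Bbar_iff k l r x).
have ex : exists x, equiv_HV b x /\ in_Bbar r x.
  case: (ex4 _ _ _ _ hodd) => [h|[h|[h|h]]].
  - by exists b; split; [apply: Or41 | apply/Bb].
  - exists [set Hmap c | c in b]; split; first exact: Or42.
    by apply/Bb; rewrite lH1 lH2 lH3 lH4.
  - exists [set Vmap c | c in b]; split; first exact: Or43.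
    by apply/Bb; rewrite lV1 lV2 lV3 lV4.
  - exists [set R180map c | c in b]; split; first exact: Or44.
    by apply/Bb; rewrite lR1 lR2 lR3 lR4.
case: ex => x [exx bx]; exists x; split; first by split.
by move=> y [ey byy]; apply: uniq.
Qed.
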